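(* For every simple graph $G$ of order $n$ with spectral radius $\mu(G)$, \[ \frac{n}{n - \mu(G)} < \phi(G) + \frac{1}{3}. \]
   Context: $\mu(G)$ denotes the largest eigenvalue of the adjacency matrix of $G$. $\phi(G)$ is the smallest integer $r$ for which the vertex set has a partition $V(G) = V_1 \cup \dots \cup V_r$ into $r$ parts such that, writing $n_i = |V_i|$, every vertex $v \in V_i$ has degree $d(v) \le n - n_i$, for all $i = 1,\dots,r$. *)

(* Defs.v *)
From HB Require Import structures.
From mathcomp Require Import all_boot all_order all_algebra.
Set Implicit Arguments. Unset Strict Implicit. Unset Printing Implicit Defensive.
Import Order.TTheory GRing.Theory Num.Theory.

Definition simple_graph (n : nat) (e : rel 'I_n) : Prop :=
  symmetric e /\ irreflexive e.

Definition deg (n : nat) (e : rel 'I_n) (v : 'I_n) : nat := #|[set u | (u != v) && e v u]|.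
(* (loops are excluded; for simple graphs this is the usual degree) *)

Definition adj_mx (R : nzRingType) (n : nat) (e : rel 'I_n) : 'M[R]_n :=
  \matrix_(i, j) ((e i j)%:R)%R.

Definition is_spectral_radius (R : rcfType) (n : nat) (e : rel 'I_n) (mu : R) : Prop :=
  eigenvalue (adj_mx R e) mu /\ (forall a : R, eigenvalue (adj_mx R e) a -> (a <= mu)%R).

(* There is a partition of V into r (possibly empty) labelled parts
   V_i = f^-1(i) such that every v in V_i has d(v) <= n - |V_i|. *)
Definition phi_partition (n : nat) (e : rel 'I_n) (r : nat) : bool :=
  [exists f : {ffun 'I_n -> 'I_r},
     [forall v : 'I_n, deg e v <= n - #|[set u | f u == f v]| ]].

Lemma phi_partition_ex (n : nat) (e : rel 'I_n) : exists r, phi_partition e r.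
Proof.
exists n; apply/existsP; exists [ffun v => v]; apply/forallP => v.
rewrite (_ : [set u | [ffun v => v] u == [ffun v => v] v] = [set v]); last first.
  by apply/setP => u; rewrite !inE !ffunE.
rewrite cards1 /deg.
have H : [set u | (u != v) && e v u] \subset [set~ v].
  by apply/subsetP => u; rewrite !inE => /andP[].
apply: (leq_trans (subset_leq_card H)).
by rewrite cardsC1 card_ord subn1.
Qed.

Definition phi (n : nat) (e : rel 'I_n) : nat := ex_minn (phi_partition_ex e).

(* Main.v *)
Require Import Defs.
From HB Require Import structures.
From mathcomp Require Import all_boot all_order all_algebra.
From mathcomp Require Import ring lra.
Import Order.TTheory GRing.Theory Num.Theory.
Local Open Scope ring_scope.

Lemma degE (R : nzRingType) n (e : rel 'I_n) (i : 'I_n) : irreflexive e ->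
  \sum_j ((e i j)%:R : R) = (deg e i)%:R.
Proof.
move=> irr; rewrite /deg -sum1_card natr_sum big_mkcond /=.
rewrite [RHS]big_mkcond; apply: eq_bigr => j _; rewrite inE.
case: (eqVneq j i) => [->|_]; first by rewrite irr.
by case: (e i j).
Qed.

Lemma eig_entry (R : rcfType) n (e : rel 'I_n) (mu : R) (x : 'rV[R]_n) :
  x *m adj_mx R e = mu *: x -> forall j, mu * x 0 j = \sum_i x 0 i * (e i j)%:R.
Proof.
move=> hx j; have := congr1 (fun M : 'rV[R]_n => M 0 j) hx; rewrite !mxE => <-.
by apply: eq_bigr => i _; rewrite mxE.
Qed.

Lemma cauchy_sum (R : realFieldType) (I : finType) (P : pred I) (F : I -> R) :
  (\sum_(i | P i) F i) ^+ 2 <= #|P|%:R * \sum_(i | P i) F i ^+ 2.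
Proof.
have [c0|cpos] := posnP #|P|.
  rewrite c0 mul0r big_pred0 ?expr0n //.
  by move=> i; apply/negbTE; rewrite -[P i]/(i \in P) (card0_eq c0).
set S := \sum_(i | P i) F i.
set c : R := #|P|%:R.
have hc : 0 < c by rewrite ltr0n.
set u := S / c.
have H : 0 <= \sum_(i | P i) (F i - u) ^+ 2 by apply: sumr_ge0 => i _; apply: sqr_ge0.
have E : \sum_(i | P i) (F i - u) ^+ 2
   = \sum_(i | P i) F i ^+ 2 - (2 * u) * S + c * u ^+ 2.
  rewrite (eq_bigr (fun i => F i ^+ 2 + (- ((2 * u) * F i)) + u ^+ 2)); last first.
    by move=> i _; clear H; move: (F i) u => a b; ring.
  rewrite !big_split /= sumrN -mulr_sumr sumr_const.
  by rewrite /c [#|P|%:R * _]mulr_natl.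
rewrite E in H.
have Hu : S = u * c by rewrite /u divfK // gt_eqF.
rewrite Hu in H *.
have : 0 <= c * (\sum_(i | P i) F i ^+ 2 - c * u ^+ 2) by rewrite -[X in X <= _](mulr0 c); nra.
nra.
Qed.

Lemma alg_key (R : realFieldType) (r n mu s m t : R) :
  1 <= r -> 0 < n -> s <= n - mu ->
  (mu + 1) * (m ^+ 2 + t) + m * n - (mu + 1) * m <= s ->
  (1 - m) ^+ 2 <= (r - 1) * t -> 0 <= t -> r * m <= 1 ->
  3 * n < (3 * r + 1) * (n - mu).
Proof.
move=> hr hn hD hs hc ht hrm.
set q := m ^+ 2 + t - m.
have hq1 : (r * m - 1) * (m - 1) <= (r - 1) * q.
  rewrite /q; nra.
have [r1|r1] := eqVneq r 1.
  have m1 : m = 1.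
    move: hc; rewrite r1 subrr mul0r => hc.
    have : (1 - m) ^+ 2 = 0 by apply/eqP; rewrite eq_le hc sqr_ge0.
    by move/eqP; rewrite sqrf_eq0 subr_eq0 => /eqP.
  subst r m; rewrite /q in hs; nra.
have hr1 : 1 < r by rewrite lt_neqAle eq_sym r1 hr.
have hm1 : m <= 1 by nra.
have hq : 0 <= q.
  have : 0 <= (r - 1) * q by nra.
  by rewrite pmulr_rge0 // subr_gt0.
have hsq : (mu + 1) * q + m * n <= s by rewrite /q; nra.
have hX : 3 * (r - 1) < (r - 1) * ((3 * r - 2) * q + (3 * r + 1) * m).
  have hH : 0 < (3 * r ^+ 2 - 2 * r) * m ^+ 2 - (3 * r - 1) * m + 1.
    have hp : 0 < 3 * r ^+ 2 - 2 * r by nra.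
    have : 0 < 4 * (3 * r ^+ 2 - 2 * r) * ((3 * r ^+ 2 - 2 * r) * m ^+ 2 - (3 * r - 1) * m + 1).
      have -> : 4 * (3 * r ^+ 2 - 2 * r) * ((3 * r ^+ 2 - 2 * r) * m ^+ 2 - (3 * r - 1) * m + 1)
        = (2 * (3 * r ^+ 2 - 2 * r) * m - (3 * r - 1)) ^+ 2 + (3 * r + 1) * (r - 1) by ring.
      have : 0 < (3 * r + 1) * (r - 1) by nra.
      have := sqr_ge0 (2 * (3 * r ^+ 2 - 2 * r) * m - (3 * r - 1)). lra.
    nra.
  nra.
have hX' : 3 < (3 * r - 2) * q + (3 * r + 1) * m.
  by move: hX; rewrite [_ * (_ + _)]mulrC ltr_pM2r // subr_gt0.
rewrite ltNge; apply/negP => hc'.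
have hk : n * (3 * r - 2) <= (3 * r + 1) * (mu + 1) by nra.
nra.
Qed.

Theorem corollary12 (R : rcfType) (n : nat) (e : rel 'I_n) (mu : R) :
  simple_graph e -> is_spectral_radius e mu ->
  n%:R / (n%:R - mu) < (phi e)%:R + 3%:R^-1.
Proof.
move=> [esym eirr] [/eigenvalueP [x hx xnz] _].
have n0 : (0 < n)%N.
  case: n e x hx xnz {esym eirr} => // e x _; by rewrite thinmx0 eqxx.
have hP : phi_partition e (phi e) by rewrite /phi; case: ex_minnP.
set r := phi e in hP *.
move: hP => /existsP [f /forallP hf].
have r0 : (0 < r)%N by case: (f (Ordinal n0)) => i hi; exact: leq_ltn_trans (leq0n i) hi.

have [mu0|mupos] := leP mu 0.
  have hD : n%:R <= n%:R - mu by lra.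
  have hn : 0 < n%:R :> R by rewrite ltr0n.
  have hr1 : 1 <= r%:R :> R by rewrite ler1n.
  apply: (le_lt_trans (y := 1)).
    by rewrite ler_pdivrMr ?mul1r //; lra.
  have : 0 < 3%:R^-1 :> R by rewrite invr_gt0 ltr0n.
  lra.
pose z : 'I_n -> R := fun j => `|x 0 j|.
set Z := \sum_j z j.
have z0 : forall j, 0 <= z j by move=> j; exact: normr_ge0.
have Zpos : 0 < Z.
  rewrite lt_def sumr_ge0 ?andbT //; apply: contra xnz => /eqP H.
  apply/eqP/rowP => j; rewrite mxE.
  have := (psumr_eq0P (fun i _ => z0 i) H (i:=j) isT).
  by move/normr0_eq0.
set y := fun j => z j / Z.
have hy0 : forall j, 0 <= y j by move=> j; rewrite /y divr_ge0 // ltW.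
have hy1 : \sum_j y j = 1 by rewrite /y -mulr_suml divff // gt_eqF.
have hyA : forall j, mu * y j <= \sum_i y i * (e i j)%:R.
  move=> j.
  have h1 : mu * z j <= \sum_i z i * (e i j)%:R.
    rewrite /z -(ger0_norm (ltW mupos)) -normrM (@eig_entry _ _ _ _ _ hx j).
    apply: le_trans (ler_norm_sum _ _ _) _.
    by apply: ler_sum => i _; rewrite normrM normr_nat.
  rewrite (eq_bigr (fun i => (z i * (e i j)%:R) / Z)); last by move=> i _; rewrite /y mulrAC.
  rewrite -mulr_suml /y mulrA; apply: ler_wpM2r => //.
  by rewrite invr_ge0 ltW.
have hk : forall j, (mu + 1) * y j <= 1.
  move=> j.
  have h2 : \sum_i y i * (e i j)%:R <= \sum_(i | i != j) y i.
    rewrite (bigD1 j) //= eirr mulr0 add0r.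
    by apply: ler_sum => i _; case: (e i j); rewrite ?mulr1 ?mulr0.
  have h3 := hy1; rewrite (bigD1 j) //= in h3.
  have := hyA j; lra.
have hdeg : mu <= \sum_i y i * (deg e i)%:R.
  have -> : mu = \sum_j mu * y j by rewrite -mulr_sumr hy1 mulr1.
  apply: le_trans (ler_sum _ (fun j _ => hyA j)) _.
  rewrite exchange_big /=; apply: ler_sum => i _.
  by rewrite -mulr_sumr degE.
set a := fun l : 'I_r => #|[set u | f u == l]|.
have hdeg2 : forall i, (deg e i)%:R <= n%:R - (a (f i))%:R :> R.
  move=> i; have := hf i => h.
  rewrite -natrB; first by rewrite ler_nat.
  by rewrite -[X in (_ <= X)%N](card_ord n) max_card.
set s := \sum_i y i * (a (f i))%:R.
have hs : s <= n%:R - mu.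
  have : \sum_i y i * (deg e i)%:R <= \sum_i y i * (n%:R - (a (f i))%:R).
    by apply: ler_sum => i _; apply: ler_wpM2l.
  have E : \sum_i y i * (n%:R - (a (f i))%:R) = n%:R - s.
    rewrite (eq_bigr (fun i => y i * n%:R - y i * (a (f i))%:R)); last by move=> i _; rewrite mulrBr.
    by rewrite sumrB -mulr_suml hy1 mul1r.
  rewrite E; lra.
set Y := fun l : 'I_r => \sum_(i | f i == l) y i.
have hsY : s = \sum_l (a l)%:R * Y l.
  rewrite /s (partition_big f xpredT) //=; apply: eq_bigr => l _.
  rewrite /Y mulr_sumr; apply: eq_big => [i|i /eqP <-] //.
  by rewrite mulrC.
have hY1 : \sum_l Y l = 1.
  by rewrite -hy1 (partition_big f xpredT).
have haE : forall l, (a l)%:R = \sum_(i | f i == l) (1 : R).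
  by move=> l; rewrite /a -sum1_card natr_sum; apply: eq_bigl => i; rewrite inE.
have ha : \sum_l (a l)%:R = n%:R :> R.
  have -> : n%:R = \sum_(i : 'I_n) (1 : R) by rewrite sumr_const card_ord.
  rewrite (partition_big f xpredT) //=; apply: eq_bigr => l _; exact: haE.
have haY : forall l, (mu + 1) * Y l <= (a l)%:R.
  move=> l; rewrite haE /Y mulr_sumr; apply: ler_sum => i _; exact: hk.
case: (@arg_minP _ R _ (Ordinal r0) xpredT Y isT) => l0 _ hmin.
set m := Y l0.
have hrm : r%:R * m <= 1.
  have -> : r%:R * m = \sum_(l : 'I_r) m by rewrite sumr_const card_ord mulr_natl.
  rewrite -hY1.
  by apply: ler_sum => l _; exact: hmin.
have hkey : (mu + 1) * \sum_l Y l ^+ 2 + m * n%:R - (mu + 1) * m <= s.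
  have H : 0 <= \sum_l ((a l)%:R - (mu + 1) * Y l) * (Y l - m).
    apply: sumr_ge0 => l _; apply: mulr_ge0; rewrite subr_ge0 //; exact: hmin.
  rewrite (eq_bigr (fun l => (a l)%:R * Y l - m * (a l)%:R - (mu + 1) * Y l ^+ 2 + (mu + 1) * m * Y l)) in H; last first.
    by move=> l _; ring.
  rewrite !big_split /= !sumrN -!mulr_sumr hY1 ha -hsY in H.
  lra.
set t := \sum_(l | l != l0) Y l ^+ 2.
have hQ : \sum_l Y l ^+ 2 = m ^+ 2 + t by rewrite (bigD1 l0).
have hS : \sum_(l | l != l0) Y l = 1 - m.
  have := hY1; rewrite (bigD1 l0) //= -/m => h; lra.
have hc : (1 - m) ^+ 2 <= (r%:R - 1) * t.
  have := @cauchy_sum R _ (predC1 l0) Y.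
  rewrite cardC1 card_ord hS -subn1 natrB // .
have ht : 0 <= t by apply: sumr_ge0 => l _; exact: sqr_ge0.
rewrite hQ in hkey.
have hr1 : 1 <= r%:R :> R by rewrite ler1n.
have hn1 : 0 < n%:R :> R by rewrite ltr0n.
have := @alg_key R r%:R n%:R mu s m t hr1 hn1 hs hkey hc ht hrm.
move=> Hfin.
have hD : 0 < n%:R - mu.
  have hn : 0 < n%:R :> R by rewrite ltr0n.
  have hr : 0 <= r%:R :> R by [].
  nra.
rewrite ltr_pdivrMr //.
have -> : (r%:R + 3%:R^-1) * (n%:R - mu) = ((3 * r%:R + 1) * (n%:R - mu)) / 3%:R.
  by field.
rewrite ltr_pdivlMr ?ltr0n //.
lra.
Qed.
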